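(* Let $n\ge 2$, let $G$ and $H$ be non-trivial groups, let $\sigma\colon G\to S_n$ be a surjective homomorphism, and let $W=H\wr_\sigma G=H^n\rtimes_\sigma G$. Then \[ Z(W)=\Delta(Z(H))\times\bigl(Z(G)\cap\ker\sigma\bigr), \] where $\Delta(Z(H))=\{((a,\dots,a),1): a\in Z(H)\}$ and $Z(G)\cap\ker\sigma$ is identified with $\{(\mathbf 1,g): g\in Z(G)\cap\ker\sigma\}$. In particular, if $Z(G)\subseteq\ker\sigma$, then $Z(W)=\Delta(Z(H))\times Z(G)$.
   Context: For $n\ge2$, groups $G,H$ and a homomorphism $\sigma\colon G\to S_n$, the permutational wreath pullback $H\wr_\sigma G=H^n\rtimes_\sigma G$ is the semidirect product in which $G$ acts on $H^n$ by permuting coordinates through $\sigma$: $g\cdot(h_1,\dots,h_n)=(h_{\sigma(g)(1)},\dots,h_{\sigma(g)(n)})$ (with the composition convention in $S_n$ making this a left action). Elements are pairs $(\mathbf h,g)$ with $\mathbf h\in H^n$, $g\in G$, and $(\mathbf h,g)(\mathbf k,x)=(\mathbf h\cdot g\mathbf k,\,gx)$. The diagonal map is $\Delta\colon H\to H^n$, $\Delta(h)=(h,\dots,h)$. *)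

(* Defs.v *)
From mathcomp Require Import all_boot all_fingroup.
Set Implicit Arguments. Unset Strict Implicit. Unset Printing Implicit Defensive.

(* Abstract (possibly infinite) groups: carrier with operations and axioms. *)
Record Grp := {
  gcar :> Type;
  gmul : gcar -> gcar -> gcar;
  gone : gcar;
  ginv : gcar -> gcar;
  gmulA : forall x y z, gmul x (gmul y z) = gmul (gmul x y) z;
  gmul1 : forall x, gmul gone x = x;
  gmulV : forall x, gmul (ginv x) x = gone
}.

Arguments gmul {g}.
Arguments gone {g}.
Arguments ginv {g}.

Definition nontrivial (G : Grp) : Prop := exists x : G, x <> gone.

Definition in_center (G : Grp) (z : G) : Prop := forall x : G, gmul z x = gmul x z.

(* group homomorphism into S_n = {perm 'I_n}.  With mathcomp's convention
   (s * t) i = t (s i), the formula g.h = (h_{sigma g (i)})_i is a left action. *)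
Definition is_hom (G : Grp) (n : nat) (sigma : G -> {perm 'I_n}) : Prop :=
  forall g x : G, sigma (gmul g x) = (sigma g * sigma x)%g.

Definition wr_elt (H G : Grp) (n : nat) : Type := ('I_n -> H) * G.

Definition wr_act (H G : Grp) (n : nat) (sigma : G -> {perm 'I_n})
  (g : G) (h : 'I_n -> H) : 'I_n -> H := fun i => h (sigma g i).

Definition wr_mul (H G : Grp) (n : nat) (sigma : G -> {perm 'I_n})
  (w v : wr_elt H G n) : wr_elt H G n :=
  (fun i => gmul (w.1 i) (wr_act sigma w.2 v.1 i), gmul w.2 v.2).

Definition in_wr_center (H G : Grp) (n : nat) (sigma : G -> {perm 'I_n})
  (w : wr_elt H G n) : Prop :=
  forall v : wr_elt H G n, wr_mul sigma w v = wr_mul sigma v w.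

Definition diag {H : Grp} (n : nat) (a : H) : 'I_n -> H := fun _ => a.
Arguments diag {H} n a.

(* Main.v *)
From Stdlib Require Import FunctionalExtensionality.
Require Import Defs.
From mathcomp Require Import all_boot all_fingroup.

Section Aux.
Variable G : Grp.
Lemma gmulVr (x : G) : gmul x (ginv x) = gone.
Proof.
have e : gmul (ginv (ginv x)) (ginv x) = gone by apply: gmulV.
rewrite -[gmul x (ginv x)]gmul1 -{1}e -!gmulA (gmulA (ginv x)) gmulV gmul1.
exact: e.
Qed.
Lemma gmul1r (x : G) : gmul x gone = x.
Proof. by rewrite -(gmulV x) gmulA gmulVr gmul1. Qed.
Lemma gcancel (a b c : G) : gmul a b = gmul a c -> b = c.
Proof. by move=> e; rewrite -(gmul1 b) -(gmulV a) -gmulA e gmulA gmulV gmul1. Qed.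
End Aux.

Theorem theorem3p3 (n : nat) (G H : Grp) (sigma : G -> {perm 'I_n}) :
  2 <= n -> nontrivial G -> nontrivial H ->
  is_hom sigma -> (forall s : {perm 'I_n}, exists g : G, sigma g = s) ->
  (forall w : wr_elt H G n,
     in_wr_center sigma w <->
     exists (a : H) (g : G),
       [/\ in_center a, in_center g, sigma g = 1%g & w = (diag n a, g)])
  /\
  ((forall g : G, in_center g -> sigma g = 1%g) ->
   forall w : wr_elt H G n,
     in_wr_center sigma w <->
     exists (a : H) (g : G), [/\ in_center a, in_center g & w = (diag n a, g)]).
Proof.
move=> n2 _ [y0 y0ne] hom surj.
have s1 : sigma gone = 1%g.
  have := hom gone gone; rewrite gmul1 => e.
  by apply: (mulgI (sigma gone)); rewrite -e mulg1.
have main : forall w : wr_elt H G n,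
     in_wr_center sigma w <->
     exists (a : H) (g : G),
       [/\ in_center a, in_center g, sigma g = 1%g & w = (diag n a, g)].
  case=> h g; split.
  - move=> C.
    have i0 : 'I_n by exists 0; apply: leq_trans n2.
    have C1 : forall x, (fun i => gmul (h i) gone, gmul g x) =
               (fun i => gmul gone (h (sigma x i)), gmul x g).
      by move=> x; have := C (fun _ => gone, x).
    have gc : in_center g by move=> x; have := C1 x; case.
    have hc : forall x i, h (sigma x i) = h i.
      move=> x i; case: (C1 x) => e _.
      by have := equal_f e i; rewrite gmul1 gmul1r.
    have hconst : forall i, h i = h i0.
      move=> i; have [x ex] := surj (tperm i0 i).
      by rewrite -(hc x i0) ex tpermL.
    have hd : h = diag n (h i0) by apply: functional_extensionality.
    have C2 : forall k i, gmul (h i) (k (sigma g i)) = gmul (k i) (h (sigma gone i)).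
      move=> k i; have := C (k, gone); case=> e _.
      exact: (equal_f e i).
    have ac : in_center (h i0).
      move=> b; have := C2 (fun _ => b) i0; by rewrite s1 perm1.
    have kc : forall (k : 'I_n -> H) i, k (sigma g i) = k i.
      move=> k i; apply: (@gcancel _ (h i0)).
      by rewrite -(hconst i) C2 s1 perm1 hconst ac.
    exists (h i0), g; split => //; last by rewrite hd.
    apply/permP => i; rewrite perm1; apply/eqP; apply/negPn/negP => ne.
    have := kc (fun m => if m == i then y0 else gone) i.
    by rewrite eqxx (negbTE ne) => e; apply: y0ne.
  - case=> a [x [ac xc sx [-> ->]]] [k y].
    rewrite /wr_mul /wr_act /= sx xc; congr pair.
    by apply: functional_extensionality => i; rewrite perm1 ac.
split=> // hz w; split=> [/main|H1]; last apply/main.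
- by case=> a [g [? ? ? ?]]; exists a, g.
- by case: H1 => a [g [? gc ?]]; exists a, g; split=> //; apply: hz.
Qed.
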